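(* Let $k,m$ be integers with $0<k$ and $2k<m$, and let $n=2k-1$. Then $\alpha(m,n,k)=\binom{n}{k}=h(m,n,k)$, and $\binom{[n]}{k}$ is the unique $(m,n,k)$-intersecting family of maximum cardinality.
   Context: For positive integers $a\leqslant b$, $[a,b]=\{a,a+1,\dots,b\}$ and $[a]=[1,a]$; $\binom{X}{k}$ denotes the family of all $k$-subsets of a set $X$. A family of sets is intersecting if no two of its members are disjoint. For integers $0<k\leqslant n<2k\leqslant m$, an $(m,n,k)$-intersecting family is an intersecting family $\mathcal{F}$ with $\binom{[n]}{k}\subseteq\mathcal{F}\subseteq\binom{[m]}{k}$, and $\alpha(m,n,k)$ is the maximum cardinality of an $(m,n,k)$-intersecting family. Define $h(m,n,k)=\binom{n}{k}+\sum_{i=1}^{2k-n-1}\binom{n-1}{k-i-1}\binom{m-n}{i}$ (an empty sum is $0$). *)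

(* Defs.v *)
From mathcomp Require Import all_boot.
Set Implicit Arguments. Unset Strict Implicit. Unset Printing Implicit Defensive.

(* Ground set [m] = {1,...,m} is represented by 'I_m = {0,...,m-1}
   (element i of 'I_m stands for i+1); [n] is then {i : 'I_m | i < n}. *)

Definition intersecting (T : finType) (F : {set {set T}}) : bool :=
  [forall A in F, forall B in F, A :&: B != set0].

Definition binom (T : finType) (X : {set T}) (k : nat) : {set {set T}} :=
  [set A : {set T} | (A \subset X) && (#|A| == k)].

Definition initial (m n : nat) : {set 'I_m} := [set i : 'I_m | i < n].

Definition mnk_intersecting (m n k : nat) (F : {set {set 'I_m}}) : bool :=
  [&& intersecting F,
      binom (initial m n) k \subset F &
      F \subset binom [set: 'I_m] k].

Definition alpha (m n k : nat) : nat :=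
  \max_(F : {set {set 'I_m}} | mnk_intersecting n k F) #|F|.

Definition h (m n k : nat) : nat :=
  'C(n, k) + \sum_(1 <= i < (2 * k - n)) 'C(n.-1, k - i - 1) * 'C(m - n, i).

(* Main.v *)
Require Import Defs.
From mathcomp Require Import all_boot.
From mathcomp Require Import zify.

Lemma card_initial m n : n <= m -> #|initial m n| = n.
Proof.
move=> le; rewrite /initial.
have -> : [set i : 'I_m | i < n] = [set widen_ord le i | i : 'I_n].
  apply/setP=> i; rewrite inE; apply/idP/imsetP.
    by move=> lt; exists (Ordinal lt) => //; apply/val_inj.
  by case=> j _ ->; rewrite /= ltn_ord.
rewrite card_imset ?card_ord // => a b /(congr1 val) /= e; exact: val_inj.
Qed.

Lemma key k m n (F : {set {set 'I_m}}) :
  0 < k -> n = 2 * k - 1 -> n <= m -> mnk_intersecting n k F ->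
  F = binom (initial m n) k.
Proof.
move=> k0 en le /and3P [/forallP Hi sub1 sub2].
apply/eqP; rewrite eqEsubset sub1 andbT; apply/subsetP=> A AF.
have := subsetP sub2 _ AF; rewrite !inE subsetT /= => /eqP cA.
rewrite cA eqxx andbT; apply/negPn/negP=> nsub.
set X := initial m n :\: A.
have cX : k <= #|X|.
  have : #|initial m n :&: A| < k.
    rewrite -cA; apply: proper_card; rewrite properEneq subsetIr andbT.
    apply/negP=> /eqP e; move/negP: nsub; apply; by rewrite -e subsetIl.
  move=> lt; have := cardsID A (initial m n); rewrite card_initial // /X.
  move=> e; rewrite -cA in lt; move: e lt; rewrite setIC; lia.
have : 0 < #|[set B : {set 'I_m} | B \subset X & #|B| == k]|.
  by rewrite cards_draws bin_gt0.
case/card_gt0P=> B; rewrite inE => /andP [BX /eqP cB].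
have BF : B \in F.
  apply: (subsetP sub1); rewrite inE cB eqxx andbT.
  by apply: subset_trans BX _; rewrite subDset subsetUr.
have := Hi A; rewrite AF /= => /forallP /(_ B); rewrite BF /= => /negP; apply.
apply/eqP/setP=> x; rewrite !inE; apply/negP=> /andP [xA xB].
by have := subsetP BX _ xB; rewrite !inE xA.
Qed.

Lemma binom_ok k m n : 0 < k -> n = 2 * k - 1 -> n <= m ->
  mnk_intersecting n k (binom (initial m n) k).
Proof.
move=> k0 en le; rewrite /mnk_intersecting subxx /=; apply/andP; split.
  apply/forallP=> A; apply/implyP; rewrite inE => /andP [As /eqP cA].
  apply/forallP=> B; apply/implyP; rewrite inE => /andP [Bs /eqP cB].
  apply/negP=> /eqP e.
  have := cardsU A B; rewrite e cards0 subn0 cA cB => cU.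
  have := subset_leq_card (introT subUsetP (conj As Bs)) : #|A :|: B| <= #|initial m n|.
  rewrite card_initial // cU; lia.
apply/subsetP=> A; rewrite !inE subsetT /= => /andP [_ ->]; by [].
Qed.

Theorem proposition6 (k m n : nat) :
  0 < k -> 2 * k < m -> n = 2 * k - 1 ->
  [/\ alpha m n k = 'C(n, k),
      'C(n, k) = h m n k &
      forall F : {set {set 'I_m}},
        mnk_intersecting n k F -> #|F| = alpha m n k ->
        F = binom (initial m n) k].
Proof.
move=> k0 km en.
have le : n <= m by lia.
have cb : #|binom (initial m n) k| = 'C(n, k).
  by rewrite /binom cards_draws card_initial.
have al : alpha m n k = 'C(n, k).
  apply/eqP; rewrite eqn_leq; apply/andP; split.
    apply/bigmax_leqP=> F HF; by rewrite (@key k m n F k0 en le HF) cb.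
  rewrite -cb; exact: (leq_bigmax_cond _ (@binom_ok k m n k0 en le)).
split=> //.
  rewrite /h.
  have -> : 2 * k - n = 1 by lia.
  by rewrite big_geq // addn0.
by move=> F HF _; exact: (@key k m n F k0 en le HF).
Qed.
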